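(* Let $A\in\mathbb{R}^{n\times n}$, $B\in\mathbb{R}^{n\times m}$, symmetric $Q\succeq 0$, symmetric $R\succ 0$, $Q_f\succ 0$, and a horizon $t_f\in\mathbb{N}$. For a binary switching signal $\sigma$, define $P_\sigma(t)$ for $t=t_f,t_f-1,\ldots,0$ by $P_\sigma(t_f)=Q_f$ and $P_\sigma(t)=Q+A^{\mathsf T}P_\sigma(t+1)A-\sigma(t)A^{\mathsf T}P_\sigma(t+1)B\,(R+B^{\mathsf T}P_\sigma(t+1)B)^{-1}B^{\mathsf T}P_\sigma(t+1)A$. If $\sigma_1\preceq\sigma_2$, then $P_{\sigma_1}(0)\succeq P_{\sigma_2}(0)$ (in the positive semidefinite order).
   Context: $P_\sigma(0)$ gives the optimal finite-horizon LQR cost $x_0^{\mathsf T}P_\sigma(0)x_0$ for the time-varying system $x(t+1)=Ax(t)+\sigma(t)Bu(t)$ with cost $x(t_f)^{\mathsf T}Q_fx(t_f)+\sum_{t<t_f}(x(t)^{\mathsf T}Qx(t)+u(t)^{\mathsf T}Ru(t))$. Partial order on binary signals: $\sigma_1\preceq\sigma_2$ if for every $i$ with $\sigma_1(i)=1$ we also have $\sigma_2(i)=1$. *)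

(* Defs.v *)
From HB Require Import structures.
From mathcomp Require Import all_boot all_order all_algebra.
Set Implicit Arguments. Unset Strict Implicit. Unset Printing Implicit Defensive.
Import Order.TTheory GRing.Theory Num.Theory.
Local Open Scope ring_scope.

Definition qform (R : realFieldType) n (M : 'M[R]_n) (x : 'cV[R]_n) : R :=
  (x^T *m M *m x) 0 0.

Definition psd (R : realFieldType) n (M : 'M[R]_n) : Prop :=
  M^T = M /\ forall x : 'cV[R]_n, 0 <= qform M x.

Definition pd (R : realFieldType) n (M : 'M[R]_n) : Prop :=
  M^T = M /\ forall x : 'cV[R]_n, x != 0 -> 0 < qform M x.

Definition loewner_ge (R : realFieldType) n (M1 M2 : 'M[R]_n) : Prop :=
  psd (M1 - M2).

Definition riccati_step (R : realFieldType) n m (A : 'M[R]_n) (B : 'M[R]_(n, m))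
    (Q : 'M[R]_n) (Rw : 'M[R]_m) (s : bool) (P : 'M[R]_n) : 'M[R]_n :=
  Q + A^T *m P *m A
    - (s%:R : R) *: (A^T *m P *m B *m invmx (Rw + B^T *m P *m B) *m B^T *m P *m A).

(* P_sigma(t) for t <= tf, computed backward from P_sigma(tf) = Qf.
   riccati_from k t P = the value at time t given the value P at time t + k. *)
Fixpoint riccati_from (R : realFieldType) n m (A : 'M[R]_n) (B : 'M[R]_(n, m))
    (Q : 'M[R]_n) (Rw : 'M[R]_m) (sigma : nat -> bool) (k t : nat) (P : 'M[R]_n)
    : 'M[R]_n :=
  match k with
  | 0%N => P
  | k'.+1 => riccati_step A B Q Rw (sigma t)
               (riccati_from A B Q Rw sigma k' t.+1 P)
  end.

Definition P_sigma (R : realFieldType) n m (A : 'M[R]_n) (B : 'M[R]_(n, m))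
    (Q : 'M[R]_n) (Rw : 'M[R]_m) (Qf : 'M[R]_n) (tf : nat)
    (sigma : nat -> bool) (t : nat) : 'M[R]_n :=
  riccati_from A B Q Rw sigma (tf - t) t Qf.

Definition signal_le (sigma1 sigma2 : nat -> bool) : Prop :=
  forall i, sigma1 i -> sigma2 i.

(* Main.v *)
Require Import Defs.
From HB Require Import structures.
From mathcomp Require Import all_boot all_order all_algebra ring.
Import Order.TTheory GRing.Theory Num.Theory.
Local Open Scope ring_scope.

Section S.
Variables (R : realFieldType) (n m : nat) (A : 'M[R]_n) (B : 'M[R]_(n, m)) (Q : 'M[R]_n) (Rw : 'M[R]_m).

Definition J (P : 'M[R]_n) (x : 'cV_n) (u : 'cV_m) :=
  qform Q x + qform Rw u + qform P (A *m x + B *m u).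

Lemma e00D (X Y : 'M[R]_1) : (X + Y) 0 0 = X 0 0 + Y 0 0.
Proof. by rewrite mxE. Qed.
Lemma e00N (X : 'M[R]_1) : (- X) 0 0 = - X 0 0.
Proof. by rewrite mxE. Qed.

Lemma core (P : 'M[R]_n) (x : 'cV_n) (u : 'cV_m) :
  P^T = P -> Rw^T = Rw -> (Rw + B^T *m P *m B) \in unitmx ->
  J P x u = qform (riccati_step A B Q Rw true P) x +
     qform (Rw + B^T *m P *m B) (u + invmx (Rw + B^T *m P *m B) *m B^T *m P *m A *m x).
Proof.
move=> hP hR hU.
have hMT : (Rw + B^T *m P *m B)^T = Rw + B^T *m P *m B.
  by rewrite linearD /= !trmx_mul trmxK hP hR mulmxA.
rewrite /J /riccati_step /qform /= scale1r.
move: hU hMT; set M := Rw + B^T *m P *m B => hU hMT.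
have hMM : M = Rw + B^T *m P *m B by [].
clearbody M.
set Mi := invmx M.
have hMi : Mi^T = Mi by rewrite /Mi trmx_inv hMT.
rewrite !linearD /= !trmx_mul hMi hP trmxK.
rewrite ?mulmxDl ?mulmxDr ?mulmxN ?mulNmx ?mulmxDl ?mulmxDr ?mulmxA.
rewrite -!(mulmxA _ Mi M) -?(mulmxA _ M Mi) mulVmx // ?mulmxV // !mulmx1.

rewrite hMM ?mulmxDl ?mulmxDr ?mulmxDl ?mulmxA.
rewrite !(e00D, e00N).
ring.
Qed.

Lemma qformD (M1 M2 : 'M[R]_n) x : qform (M1 + M2) x = qform M1 x + qform M2 x.
Proof. by rewrite /qform mulmxDr mulmxDl mxE. Qed.
Lemma qformB (M1 M2 : 'M[R]_n) x : qform (M1 - M2) x = qform M1 x - qform M2 x.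
Proof. by rewrite /qform mulmxBr mulmxBl e00D e00N. Qed.
Lemma qform0 k (M : 'M[R]_k) : qform M 0 = 0.
Proof. by rewrite /qform mulmx0 mxE. Qed.
Lemma qform0M x : qform (0 : 'M[R]_n) x = 0.
Proof. by rewrite /qform mulmx0 mul0mx mxE. Qed.
Lemma qformBB (P : 'M[R]_n) (v : 'cV[R]_m) : qform (B^T *m P *m B) v = qform P (B *m v).
Proof. by rewrite /qform trmx_mul !mulmxA. Qed.

Lemma psd0 : psd (0 : 'M[R]_n).
Proof. split; first by rewrite linear0. by move=> x; rewrite qform0M. Qed.

Lemma psdD (X Y : 'M[R]_n) : psd X -> psd Y -> psd (X + Y).
Proof.
move=> [hX qX] [hY qY]; split; first by rewrite linearD /= hX hY.
by move=> x; rewrite qformD addr_ge0.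
Qed.

Lemma pd_unit k (M : 'M[R]_k) : pd M -> M \in unitmx.
Proof.
move=> [hT hq]; rewrite unitmxE unitfE; apply/negP => /det0P [v vn0 hv].
have nz : v^T != 0 by apply: contra vn0 => /eqP h; rewrite -(trmxK v) h linear0.
have := hq v^T nz; rewrite /qform trmxK.
have -> : v *m M *m v^T = 0 by rewrite hv mul0mx.
by rewrite mxE ltxx.
Qed.

Lemma pdM (P : 'M[R]_n) : pd Rw -> psd P -> pd (Rw + B^T *m P *m B).
Proof.
move=> [hR qR] [hP qP]; split.
  by rewrite linearD /= !trmx_mul trmxK hP hR mulmxA.
move=> v vn0; rewrite /qform mulmxDr mulmxDl mxE.
have := qformBB P v; rewrite /qform => ->.
apply: (lt_le_trans (qR v vn0)); rewrite lerDl; exact: qP.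
Qed.

Hypotheses (hQ : psd Q) (hRw : pd Rw).

Lemma J_ge0 P x u : psd P -> 0 <= J P x u.
Proof.
move=> [_ qP]; rewrite /J; apply: addr_ge0; last exact: qP.
apply: addr_ge0; first exact: hQ.2.
have [_ qR] := hRw; case: (eqVneq u 0) => [->|un]; first by rewrite qform0.
exact: ltW (qR u un).
Qed.

Lemma step_false_q P x : qform (riccati_step A B Q Rw false P) x = J P x 0.
Proof.
by rewrite /riccati_step /J /= scale0r subr0 qform0 addr0 mulmx0 addr0 qformD /qform ?mulmxA trmx_mul ?mulmxA.
Qed.

Let K P := invmx (Rw + B^T *m P *m B) *m B^T *m P *m A.

Lemma step_true_q P x : psd P -> qform (riccati_step A B Q Rw true P) x = J P x (- (K P *m x)).
Proof.
move=> hP; rewrite (core _ _ _ hP.1 hRw.1 (@pd_unit _ _ (pdM _ hRw hP))).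
by rewrite /K addNr qform0 addr0.
Qed.

Lemma step_true_le P x u : psd P -> qform (riccati_step A B Q Rw true P) x <= J P x u.
Proof.
move=> hP; rewrite (core _ _ _ hP.1 hRw.1 (@pd_unit _ _ (pdM _ hRw hP))) lerDl.
set v := (u + _); case: (eqVneq v 0) => [->|vn]; first by rewrite qform0.
exact: ltW ((pdM _ hRw hP).2 v vn).
Qed.

Lemma step_sym s P : P^T = P -> (riccati_step A B Q Rw s P)^T = riccati_step A B Q Rw s P.
Proof.
move=> hP; rewrite /riccati_step !linearD !linearN !linearZ /= !trmx_mul !trmxK trmx_inv.
rewrite linearD /= !trmx_mul trmxK hP hQ.1 hRw.1 !mulmxA.
done.
Qed.

Lemma J_mono P P' x u : psd (P - P') -> J P' x u <= J P x u.
Proof.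
move=> [_ h]; rewrite /J lerD2l -subr_ge0 -qformB; exact: h.
Qed.

Lemma step_psd s P : psd P -> psd (riccati_step A B Q Rw s P).
Proof.
move=> hP; split; first exact: step_sym hP.1.
move=> x; case: s.
  by rewrite step_true_q //; apply: J_ge0.
by rewrite step_false_q; apply: J_ge0.
Qed.

Lemma psdB_sym (X Y : 'M[R]_n) : X^T = X -> Y^T = Y -> (X - Y)^T = X - Y.
Proof. by move=> hX hY; rewrite linearB /= hX hY. Qed.

Lemma step_mono s P P' : psd P' -> psd (P - P') ->
  psd (riccati_step A B Q Rw s P - riccati_step A B Q Rw s P').
Proof.
move=> hP' hD.
have hP : psd P by rewrite -(subrK P' P); apply: psdD.
split; first by apply: psdB_sym; apply: step_sym; [exact: hP.1|exact: hP'.1].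
move=> x; rewrite qformB subr_ge0; case: s.
  rewrite [X in _ <= X]step_true_q //.
  exact: le_trans (step_true_le _ _ _ hP') (J_mono _ _ _ _ hD).
by rewrite !step_false_q; apply: J_mono.
Qed.

Lemma step_01 P : psd P ->
  psd (riccati_step A B Q Rw false P - riccati_step A B Q Rw true P).
Proof.
move=> hP; split; first by apply: psdB_sym; apply: step_sym; exact: hP.1.
by move=> x; rewrite qformB subr_ge0 step_false_q; apply: step_true_le.
Qed.

End S.

Theorem mainTheorem4 (R : realFieldType) (n m : nat)
    (A : 'M[R]_n) (B : 'M[R]_(n, m)) (Q : 'M[R]_n) (Rw : 'M[R]_m) (Qf : 'M[R]_n)
    (tf : nat) (sigma1 sigma2 : nat -> bool) :
  psd Q -> pd Rw -> pd Qf ->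
  signal_le sigma1 sigma2 ->
  loewner_ge (P_sigma A B Q Rw Qf tf sigma1 0) (P_sigma A B Q Rw Qf tf sigma2 0).
Proof.
move=> hQ hR [hfT hfq] hle.
have hQf : psd Qf.
  split => // x; case: (eqVneq x 0) => [->|xn]; first by rewrite qform0.
  exact: ltW (hfq x xn).
have Hpsd : forall sg k t, psd (riccati_from A B Q Rw sg k t Qf).
  move=> sg; elim=> [|k IH] t //=; exact: step_psd.
rewrite /loewner_ge /P_sigma subn0.
elim: tf 0%N => [|k IH] t /=; first by rewrite subrr; apply: psd0.
set P1 := riccati_from _ _ _ _ sigma1 k t.+1 Qf.
set P2 := riccati_from _ _ _ _ sigma2 k t.+1 Qf.
rewrite -(subrK (riccati_step A B Q Rw (sigma1 t) P2) (riccati_step _ _ _ _ _ P1)) -addrA.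
apply: psdD; first by apply: step_mono => //; [exact: Hpsd | exact: IH].
case h1: (sigma1 t).
  by rewrite (hle _ h1) subrr; apply: psd0.
case: (sigma2 t); last by rewrite subrr; apply: psd0.
by apply: step_01 => //; apply: Hpsd.

Qed.
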